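(* Consider the two-agent technology adoption game. There exists $\varepsilon_0>0$ such that for every $\varepsilon\in(0,\varepsilon_0)$ there is a nonempty open interval $J\subset(0,1)$ of costs such that for every $c\in J$: under random seeding there is an equilibrium in which the probability that both agents adopt is strictly greater than the probability that both adopt in every equilibrium under any single deterministic seed (seed 1 or seed 2).
   Context: Fix $\rho\in(0,1)$, $\varepsilon\in(0,1)$, two linked agents $1,2$, state $\theta\in\{g,b\}$ with $\Pr(\theta=g)=\rho$; in state $b$ no messages are sent. Every transmission is lost independently with probability $\varepsilon$. Deterministic seed $i$: in state $g$ the planner sends to $i$, who, if she receives it, forwards it to the other agent. Random seeding: the planner's seed is $1$ or $2$ with probability $1/2$ each, independently of everything else, and is not observed by the agents; then messages flow as under that deterministic seed. In all cases each agent observes only whether she received a message. Technology adoption game with cost $c\in(0,1)$: each agent chooses $a_i\in\{0,1\}$ (possibly mixed) as a function of her information; payoff $a_i(\mathbf 1[\theta=g\text{ and both adopt}]-c)$; equilibria are Bayesian Nash equilibria. *)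

(* Defs.v *)
From Stdlib Require Import Reals.
Open Scope R_scope.

(* States: th = true is the good state g, th = false is b.
   Signals: s_i = true iff agent i received a message. *)

Definition sumb (f : bool -> R) : R := f true + f false.

Definition sum3 (f : bool -> bool -> bool -> R) : R :=
  sumb (fun th => sumb (fun s1 => sumb (fun s2 => f th s1 s2))).

Definition dist := bool -> bool -> bool -> R.

(* Deterministic seed 1: in state g the planner sends to 1 (lost w.p. eps);
   if 1 receives it, 1 forwards to 2 (lost w.p. eps). In state b nothing. *)
Definition P_seed1 (rho eps : R) : dist := fun th s1 s2 =>
  if th then
    rho * (match s1, s2 with
           | false, false => eps
           | true, false => (1 - eps) * eps
           | true, true => (1 - eps) * (1 - eps)
           | false, true => 0
           end)
  else (if orb s1 s2 then 0 else 1 - rho).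

Definition P_seed2 (rho eps : R) : dist := fun th s1 s2 => P_seed1 rho eps th s2 s1.

(* Random seeding: seed 1 or 2 w.p. 1/2 each, unobserved by agents. *)
Definition P_random (rho eps : R) : dist := fun th s1 s2 =>
  / 2 * P_seed1 rho eps th s1 s2 + / 2 * P_seed2 rho eps th s1 s2.

(* A (possibly mixed) strategy: adoption probability as a function of the
   agent's information (whether she received a message). *)
Definition strat := bool -> R.
Definition valid_strat (s : strat) : Prop := forall x, 0 <= s x <= 1.

Definition U1 (P : dist) (c : R) (a1 a2 : strat) : R :=
  sum3 (fun th s1 s2 => P th s1 s2 * (a1 s1 * ((if th then a2 s2 else 0) - c))).
Definition U2 (P : dist) (c : R) (a1 a2 : strat) : R :=
  sum3 (fun th s1 s2 => P th s1 s2 * (a2 s2 * ((if th then a1 s1 else 0) - c))).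

Definition is_BNE (P : dist) (c : R) (a1 a2 : strat) : Prop :=
  valid_strat a1 /\ valid_strat a2 /\
  (forall t, valid_strat t -> U1 P c t a2 <= U1 P c a1 a2) /\
  (forall t, valid_strat t -> U2 P c a1 t <= U2 P c a1 a2).

Definition prob_both (P : dist) (a1 a2 : strat) : R :=
  sum3 (fun th s1 s2 => P th s1 s2 * (a1 s1 * a2 s2)).

(* Main.v *)
Require Import Defs.
From Stdlib Require Import Reals Lra Psatz.
Open Scope R_scope.

Lemma zero_of_neg (x K : R) : 0 <= x -> K < 0 -> 0 <= x * K -> x = 0.
Proof. intros H1 H2 H3. destruct (Rle_lt_or_eq_dec 0 x H1) as [h|h]; [|auto].
 exfalso. assert (x * K < 0) by (apply Rmult_pos_neg; auto). lra. Qed.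

Lemma small_bound rho eps c : 0 < rho < 1 -> 0 < eps -> eps < (1-rho)/2 -> eps < /2 ->
  1 - eps < c -> c < 1 -> 2 * eps * (1 - c) < (1 - rho) * c.
Proof. intros. assert (eps*(1-c) < eps*eps) by (apply Rmult_lt_compat_l; lra).
 assert (eps*eps < eps * ((1-rho)/2)) by (apply Rmult_lt_compat_l; lra).
 assert ((1-rho)/2 <= (1-rho)*c) by nra. nra. Qed.

Lemma seed1_zero rho eps c b1 b2 : 0 < rho < 1 -> 0 < eps -> eps < (1-rho)/2 -> eps < /2 ->
  1 - eps < c -> c < 1 -> is_BNE (P_seed1 rho eps) c b1 b2 ->
  prob_both (P_seed1 rho eps) b1 b2 = 0.
Proof.
intros Hr He He2 He3 Hc1 Hc2 [V1 [V2 [D1 D2]]].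
pose proof (small_bound rho eps c Hr He He2 He3 Hc1 Hc2) as SB.
assert (B1t := V1 true). assert (B1f := V1 false).
assert (B2t := V2 true). assert (B2f := V2 false).
assert (Hb2f : b2 false = 0).
{ specialize (D2 (fun x => if x then b2 true else 0)).
  unfold U2, sum3, sumb, P_seed1 in D2; simpl in D2.
  assert (Hv : valid_strat (fun x : bool => if x then b2 true else 0)).
  { intros [|]; lra. }
  specialize (D2 Hv).
  apply (zero_of_neg _ (rho*((1-eps)*eps)*(b1 true - c) + rho*eps*(b1 false - c) - (1-rho)*c)).
  - lra.
  - assert (rho*((1-eps)*eps)*(b1 true - c) <= rho*((1-eps)*eps)*(1 - c)).
    { apply Rmult_le_compat_l; [|lra]. apply Rmult_le_pos; [lra|]. apply Rmult_le_pos; lra. }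
    assert (rho*eps*(b1 false - c) <= rho*eps*(1 - c)).
    { apply Rmult_le_compat_l; [|lra]. apply Rmult_le_pos; lra. }
    assert (Hp : 0 <= eps*(1-c)) by (apply Rmult_le_pos; lra).
    assert (rho*(1-eps)*(eps*(1-c)) <= 1*(eps*(1-c))).
    { apply Rmult_le_compat_r; [lra|]. nra. }
    assert (rho*(eps*(1-c)) <= 1*(eps*(1-c))).
    { apply Rmult_le_compat_r; lra. }
    lra.
  - lra. }
assert (Hb1f : b1 false = 0).
{ specialize (D1 (fun x => if x then b1 true else 0)).
  unfold U1, sum3, sumb, P_seed1 in D1; simpl in D1.
  assert (Hv : valid_strat (fun x : bool => if x then b1 true else 0)).
  { intros [|]; lra. }
  specialize (D1 Hv). rewrite Hb2f in D1.
  apply (zero_of_neg _ (rho*eps*(0 - c) - (1-rho)*c)).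
  - lra.
  - nra.
  - lra. }
assert (Hb1t : b1 true = 0).
{ specialize (D1 (fun x => if x then 0 else b1 false)).
  unfold U1, sum3, sumb, P_seed1 in D1; simpl in D1.
  assert (Hv : valid_strat (fun x : bool => if x then 0 else b1 false)).
  { intros [|]; lra. }
  specialize (D1 Hv). rewrite Hb2f, Hb1f in D1.
  apply (zero_of_neg _ (rho*((1-eps)*(1-eps))*(b2 true - c) + rho*((1-eps)*eps)*(0-c))).
  - lra.
  - assert (rho*((1-eps)*(1-eps))*(b2 true - c) <= rho*((1-eps)*(1-eps))*(1 - c)).
    { apply Rmult_le_compat_l; [|lra]. apply Rmult_le_pos; [lra|]. apply Rmult_le_pos; lra. }
    assert (0 < rho*(1-eps)) by nra.
    assert (rho*((1-eps)*(1-eps))*(1 - c) + rho*((1-eps)*eps)*(0-c) = rho*(1-eps)*((1-eps) - c)) by ring.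
    assert (rho*(1-eps)*((1-eps) - c) < 0) by (apply Rmult_pos_neg; lra).
    lra.
  - lra. }
unfold prob_both, sum3, sumb, P_seed1; simpl. rewrite Hb1t, Hb1f. ring.
Qed.

Lemma seed2_to_1 rho eps c b1 b2 : is_BNE (P_seed2 rho eps) c b1 b2 ->
  is_BNE (P_seed1 rho eps) c b2 b1 /\
  prob_both (P_seed2 rho eps) b1 b2 = prob_both (P_seed1 rho eps) b2 b1.
Proof.
intros [V1 [V2 [D1 D2]]]. split; [|unfold prob_both, sum3, sumb, P_seed2, P_seed1; simpl; ring].
split; [exact V2|]. split; [exact V1|]. split.
- intros t Ht. specialize (D2 t Ht).
  unfold U1, U2, sum3, sumb, P_seed2, P_seed1 in *; simpl in *. lra.
- intros t Ht. specialize (D1 t Ht).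
  unfold U1, U2, sum3, sumb, P_seed2, P_seed1 in *; simpl in *. lra.
Qed.

Lemma Rmult_le_0_l (x y : R) : 0 <= x -> y <= 0 -> x * y <= 0.
Proof. intros. nra. Qed.

Definition recv : strat := fun x => if x then 1 else 0.

Lemma random_BNE rho eps c : 0 < rho < 1 -> 0 < eps -> eps < /2 ->
  1 - eps < c -> c < 1 - eps + eps*eps/4 ->
  is_BNE (P_random rho eps) c recv recv.
Proof.
intros Hr He He2 Hc1 Hc2.
assert (Vr : valid_strat recv) by (intros [|]; unfold recv; lra).
assert (Hcc : c*(1-eps/2) <= 1 - eps).
{ assert (c*(1-eps/2) <= (1 - eps + eps*eps/4)*(1-eps/2)) by (apply Rmult_le_compat_r; lra).
  assert (eps*eps <= eps*/2) by (apply Rmult_le_compat_l; lra). nra. }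
assert (K1 : 0 <= rho*(1-eps)*(1-eps)*(1-c) - /2*rho*(1-eps)*eps*c).
{ assert (rho*(1-eps)*(1-eps)*(1-c) - /2*rho*(1-eps)*eps*c = (rho*(1-eps))*((1-eps) - c*(1-eps/2))) by field.
  assert (0 <= (rho*(1-eps))*((1-eps) - c*(1-eps/2))) by (apply Rmult_le_pos; nra). lra. }
assert (K0 : /2*rho*(1-eps)*eps*(1-c) - rho*eps*c - (1-rho)*c <= 0).
{ assert (/2*rho*(1-eps)*eps*(1-c) - rho*eps*c = (rho*eps)*(/2*(1-eps)*(1-c) - c)) by field.
  assert ((rho*eps)*(/2*(1-eps)*(1-c) - c) <= 0).
  { apply Rmult_le_0_l. nra. nra. }
  assert (0 <= (1-rho)*c) by nra. lra. }
split; [exact Vr|]. split; [exact Vr|]. split.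
- intros t Ht. assert (T1 := Ht true). assert (T0 := Ht false).
  assert (0 <= (1 - t true)*(rho*(1-eps)*(1-eps)*(1-c) - /2*rho*(1-eps)*eps*c)) by (apply Rmult_le_pos; lra).
  assert (t false * (/2*rho*(1-eps)*eps*(1-c) - rho*eps*c - (1-rho)*c) <= 0) by (apply Rmult_le_0_l; lra).
  unfold U1, sum3, sumb, P_random, P_seed1, recv; simpl. lra.
- intros t Ht. assert (T1 := Ht true). assert (T0 := Ht false).
  assert (0 <= (1 - t true)*(rho*(1-eps)*(1-eps)*(1-c) - /2*rho*(1-eps)*eps*c)) by (apply Rmult_le_pos; lra).
  assert (t false * (/2*rho*(1-eps)*eps*(1-c) - rho*eps*c - (1-rho)*c) <= 0) by (apply Rmult_le_0_l; lra).
  unfold U2, sum3, sumb, P_random, P_seed1, recv; simpl. lra.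
Qed.

Lemma random_prob rho eps : 0 < rho < 1 -> 0 < eps < 1 -> 0 < prob_both (P_random rho eps) recv recv.
Proof. intros. unfold prob_both, sum3, sumb, P_random, P_seed1, recv; simpl.
 assert (0 < rho*((1-eps)*(1-eps))) by (apply Rmult_lt_0_compat; nra). lra. Qed.

Theorem mainTheorem13 (rho : R) (Hrho : 0 < rho < 1) :
  exists eps0 : R, 0 < eps0 /\
  forall eps : R, 0 < eps < eps0 -> eps < 1 ->
  exists a b : R, 0 <= a /\ a < b /\ b <= 1 /\
  forall c : R, a < c < b ->
  exists a1 a2 : strat,
    is_BNE (P_random rho eps) c a1 a2 /\
    (forall b1 b2 : strat, is_BNE (P_seed1 rho eps) c b1 b2 ->
       prob_both (P_seed1 rho eps) b1 b2 < prob_both (P_random rho eps) a1 a2) /\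
    (forall b1 b2 : strat, is_BNE (P_seed2 rho eps) c b1 b2 ->
       prob_both (P_seed2 rho eps) b1 b2 < prob_both (P_random rho eps) a1 a2).
Proof.
exists (Rmin (/2) ((1-rho)/2)). split.
{ apply Rmin_glb_lt; lra. }
intros eps [He He0] He1.
assert (Ha : eps < /2) by (eapply Rlt_le_trans; [exact He0|apply Rmin_l]).
assert (Hb : eps < (1-rho)/2) by (eapply Rlt_le_trans; [exact He0|apply Rmin_r]).
exists (1 - eps), (1 - eps + eps*eps/4).
assert (0 < eps*eps) by nra.
assert (eps*eps <= eps*/2) by (apply Rmult_le_compat_l; lra).
split; [lra|]. split; [lra|]. split; [lra|].
intros c [Hc1 Hc2].
assert (Hc3 : c < 1) by lra.
exists recv, recv. split; [apply random_BNE; lra|].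
assert (P := random_prob rho eps Hrho (conj He He1)).
split.
- intros b1 b2 HB. rewrite (seed1_zero rho eps c b1 b2); auto.
- intros b1 b2 HB. destruct (seed2_to_1 _ _ _ _ _ HB) as [HB' E]. rewrite E.
  rewrite (seed1_zero rho eps c b2 b1); auto.
Qed.
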